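(* Let $\Gamma_1,\Gamma_2,\Gamma_3$ be constants with $\Gamma_1+\Gamma_2+\Gamma_3=0$. Let $\vec\alpha_0,\vec\alpha_1,\vec\alpha_2,\vec\alpha_3\in\mathbb{R}^3$ be arbitrary vectors, and put $$\vec e_i=\tfrac12\left(\vec\alpha_0+\vec\alpha_i-\vec\alpha_j-\vec\alpha_k\right)\quad(\{i,j,k\}=\{1,2,3\}),\qquad \vec\delta=\tfrac14\sum_{\ell=0}^{3}\vec\alpha_\ell .$$ Let $\lambda_0,\dots,\lambda_3$ be pairwise distinct constants with $\sum_{i=1}^3\Gamma_i\lambda_i\neq0$ and $$\lambda_0=\sum_{i=1}^3\lambda_i-\frac{\sum_{i=1}^3\Gamma_i\lambda_i^2}{\sum_{i=1}^3\Gamma_i\lambda_i},$$ and let $a_{l,m}$ (skew-symmetric: $a_{m,l}=-a_{l,m}$) and $b_{l,m}$ (symmetric) for $l\ne m$ in $\{0,1,2,3\}$ be constants with $a_{l,m}b_{l,m}=\lambda_l-\lambda_m$. Suppose $\sigma,\rho,\tau:\mathbb{R}^3\to\mathbb{C}$ satisfy, for all $\vec x\in\mathbb{R}^3$ and all $l\neq m$ in $\{0,1,2,3\}$, $$a_{l,m}\,\tau(\vec x)\,\sigma(\vec x+\vec\alpha_l+\vec\alpha_m)=\sigma(\vec x+\vec\alpha_l)\tau(\vec x+\vec\alpha_m)-\tau(\vec x+\vec\alpha_l)\sigma(\vec x+\vec\alpha_m),$$ $$a_{l,m}\,\rho(\vec x)\,\tau(\vec x+\vec\alpha_l+\vec\alpha_m)=\tau(\vec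 x+\vec\alpha_l)\rho(\vec x+\vec\alpha_m)-\rho(\vec x+\vec\alpha_l)\tau(\vec x+\vec\alpha_m),$$ $$b_{l,m}\,\tau(\vec x+\vec\alpha_l)\tau(\vec x+\vec\alpha_m)=\tau(\vec x)\tau(\vec x+\vec\alpha_l+\vec\alpha_m)+\rho(\vec x)\sigma(\vec x+\vec\alpha_l+\vec\alpha_m).$$ For $n=(n_1,n_2,n_3)\in\mathbb{Z}^3$ let $\vec x(n)=\sum_{i}n_i\vec e_i$ and define $$u(n)=\begin{cases}\rho(\vec x(n)-\vec\delta)/\tau(\vec x(n)-\vec\delta), & n_1+n_2+n_3\ \text{even},\\ \sigma(\vec x(n)+\vec\delta)/\tau(\vec x(n)+\vec\delta), & n_1+n_2+n_3\ \text{odd}.\end{cases}$$ Then $u$ satisfies $$\sum_{i=1}^3\Gamma_i\left[\frac{u(n+e_i)}{1+u(n)u(n+e_i)}+\frac{u(n-e_i)}{1+u(n)u(n-e_i)}\right]=0$$ for every $n\in\mathbb{Z}^3$ at which all quantities involved are defined (all denominators nonzero), where $e_i$ denotes the $i$-th standard unit vector of $\mathbb{Z}^3$.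
   Context: This equation is the Euler–Lagrange (''variational'') equation $\partial\mathcal S/\partial u(n)=0$ of the lattice action $\mathcal S=\sum_{n\in\mathbb{Z}^3}\sum_{i=1}^3\Gamma_i\ln[1+u(n)u(n+e_i)]$. The parity classes $n_1+n_2+n_3$ even/odd are the two sublattices of the bipartite cubic lattice. *)

(* Defs.v *)
From HB Require Import structures.
From mathcomp Require Import all_boot all_order all_algebra.
From mathcomp Require Import reals.
From mathcomp Require Import complex.

Set Implicit Arguments.
Unset Strict Implicit.
Unset Printing Implicit Defensive.
Import Order.TTheory GRing.Theory Num.Theory.
Local Open Scope ring_scope.

(* Indices 0..3 of alpha, lambda, a, b are 'I_4; the lattice directions 1..3 are
   'I_3, where direction i : 'I_3 corresponds to alpha index (lift ord0 i) = i+1. *)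

Definition evec (R : realType) (alpha : 'I_4 -> 'rV[R]_3) (i : 'I_3) : 'rV[R]_3 :=
  2^-1 *: (alpha ord0 + alpha (lift ord0 i)
           - \sum_(j < 3 | j != i) alpha (lift ord0 j)).

Definition delta (R : realType) (alpha : 'I_4 -> 'rV[R]_3) : 'rV[R]_3 :=
  4^-1 *: \sum_(l < 4) alpha l.

Definition xvec (R : realType) (alpha : 'I_4 -> 'rV[R]_3) (n : 'I_3 -> int) : 'rV[R]_3 :=
  \sum_(i < 3) (n i)%:~R *: evec alpha i.

Definition even_site (n : 'I_3 -> int) : bool := (2 %| \sum_(i < 3) n i)%Z.

Definition upoint (R : realType) (alpha : 'I_4 -> 'rV[R]_3) (n : 'I_3 -> int) : 'rV[R]_3 :=
  if even_site n then xvec alpha n - delta alpha else xvec alpha n + delta alpha.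

Definition u (R : realType) (alpha : 'I_4 -> 'rV[R]_3)
    (sigma rho tau : 'rV[R]_3 -> R[i]) (n : 'I_3 -> int) : R[i] :=
  if even_site n then rho (upoint alpha n) / tau (upoint alpha n)
  else sigma (upoint alpha n) / tau (upoint alpha n).

Definition shiftp (n : 'I_3 -> int) (i : 'I_3) : 'I_3 -> int :=
  fun j => n j + (j == i)%:Z.
Definition shiftm (n : 'I_3 -> int) (i : 'I_3) : 'I_3 -> int :=
  fun j => n j - (j == i)%:Z.

(* Main.v *)
Require Import Defs.
From HB Require Import structures.
From mathcomp Require Import all_boot all_order all_algebra.
From mathcomp Require Import reals.
From mathcomp Require Import complex.
From mathcomp Require Import zify ring lra.
Import Order.TTheory GRing.Theory Num.Theory.
Local Open Scope ring_scope.

Lemma ordS0 : ordS (ord0 : 'I_3) = lift ord0 ord0. Proof. by apply: val_inj. Qed.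
Lemma ordS1 : ordS (lift ord0 ord0 : 'I_3) = lift ord0 (lift ord0 ord0). Proof. by apply: val_inj. Qed.
Lemma ordS2 : ordS (lift ord0 (lift ord0 ord0) : 'I_3) = ord0. Proof. by apply: val_inj. Qed.
Lemma ord3_cases (P : 'I_3 -> Prop) : P ord0 -> P (lift ord0 ord0) -> P (lift ord0 (lift ord0 ord0)) ->
  forall i, P i.
Proof.
move=> h0 h1 h2 [[|[|[|//]]] Hi].
- by have -> : Ordinal Hi = ord0 by apply: val_inj.
- by have -> : Ordinal Hi = lift ord0 ord0 by apply: val_inj.
- by have -> : Ordinal Hi = lift ord0 (lift ord0 ord0) by apply: val_inj.
Qed.

Lemma sumA3 (V : zmodType) (A : 'I_4 -> V) (i : 'I_3) :
  \sum_(j < 3 | j != i) A (lift ord0 j) = A (lift ord0 (ordS i)) + A (lift ord0 (ordS (ordS i))).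
Proof.
rewrite big_mkcond !big_ord_recl big_ord0 /=.
elim/ord3_cases: i; rewrite /= ?ordS0 ?ordS1 ?ordS2 ?ordS0 ?ordS1 ?add0r ?addr0 //; by rewrite addrC.
Qed.

Lemma sumA4 (V : zmodType) (A : 'I_4 -> V) (i : 'I_3) :
  \sum_(l < 4) A l = A ord0 + A (lift ord0 i) + A (lift ord0 (ordS i)) + A (lift ord0 (ordS (ordS i))).
Proof.
rewrite !big_ord_recl big_ord0 addr0 -!addrA; congr (_ + _).
elim/ord3_cases: i; rewrite ?ordS0 ?ordS1 ?ordS2 ?ordS0 ?ordS1 //.
- by rewrite [RHS]addrA [RHS]addrC.
- by rewrite [RHS]addrC -addrA.
Qed.

Lemma evecE (R : realType) (alpha : 'I_4 -> 'rV[R]_3) i :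
  evec alpha i = 2^-1 *: (alpha ord0 + alpha (lift ord0 i)
     - (alpha (lift ord0 (ordS i)) + alpha (lift ord0 (ordS (ordS i))))).
Proof. by rewrite /evec sumA3. Qed.

Lemma deltaE (R : realType) (alpha : 'I_4 -> 'rV[R]_3) i :
  delta alpha = 4^-1 *: (alpha ord0 + alpha (lift ord0 i)
     + alpha (lift ord0 (ordS i)) + alpha (lift ord0 (ordS (ordS i)))).
Proof. by rewrite /delta (sumA4 _ _ i). Qed.

Lemma V1 (R : realType) (alpha : 'I_4 -> 'rV[R]_3) (X : 'rV[R]_3) i :
  X + evec alpha i + delta alpha = X - delta alpha + alpha ord0 + alpha (lift ord0 i).
Proof.
rewrite (evecE _ _ i) (deltaE _ _ i).
apply/rowP => c; rewrite !mxE.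
have h2 : (2:R) != 0 by rewrite pnatr_eq0.
by field.
Qed.
Lemma alg0 (C : fieldType) (g1 g2 g3 l0 l1 l2 l3 s0 s1 s2 s3 : C) :
  g1 + g2 + g3 = 0 -> g1 * l1 + g2 * l2 + g3 * l3 != 0 ->
  l0 = l1 + l2 + l3 - (g1 * l1 ^+ 2 + g2 * l2 ^+ 2 + g3 * l3 ^+ 2) / (g1 * l1 + g2 * l2 + g3 * l3) ->
  l0 - l1 != 0 -> l0 - l2 != 0 -> l0 - l3 != 0 -> l1 - l2 != 0 -> l2 - l3 != 0 -> l3 - l1 != 0 ->
  g1 * ((s0 - s1) / (l0 - l1) + (s2 - s3) / (l2 - l3))
  + g2 * ((s0 - s2) / (l0 - l2) + (s3 - s1) / (l3 - l1))
  + g3 * ((s0 - s3) / (l0 - l3) + (s1 - s2) / (l1 - l2)) = 0.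
Proof.
move=> hg hD hl0 h01 h02 h03 h12 h23 h31.
have eg3 : g3 = - g1 - g2 by apply/eqP; rewrite -subr_eq0 -hg; apply/eqP; ring.
move: hD hl0; rewrite eg3 => hD hl0.
have e0 : l0 * (g1 * l1 + g2 * l2 + (- g1 - g2) * l3) = (l1 + l2 + l3) * (g1 * l1 + g2 * l2 + (- g1 - g2) * l3) - (g1 * l1 ^+ 2 + g2 * l2 ^+ 2 + (- g1 - g2) * l3 ^+ 2).
  by rewrite hl0; field.

rewrite hl0; field.
by rewrite -e0 -!mulrDl !mulf_eq0 !negb_or h01 h02 h03 h12 h23 h31 hD.
Qed.

Ltac vtac R alpha i :=
  rewrite (evecE R alpha i) (deltaE R alpha i);
  apply/rowP => c; rewrite !mxE;
  have h2 : (2:R) != 0 by rewrite pnatr_eq0.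

Lemma V2 (R : realType) (alpha : 'I_4 -> 'rV[R]_3) (X : 'rV[R]_3) i :
  X - evec alpha i + delta alpha = X - delta alpha + alpha (lift ord0 (ordS i)) + alpha (lift ord0 (ordS (ordS i))).
Proof. vtac R alpha i; by field. Qed.
Lemma V3a (R : realType) (alpha : 'I_4 -> 'rV[R]_3) (X : 'rV[R]_3) i :
  X + evec alpha i - delta alpha + alpha (lift ord0 (ordS i)) + alpha (lift ord0 (ordS (ordS i))) = X + delta alpha.
Proof. vtac R alpha i; by field. Qed.
Lemma V3b (R : realType) (alpha : 'I_4 -> 'rV[R]_3) (X : 'rV[R]_3) i :
  X + evec alpha i - delta alpha + alpha (lift ord0 (ordS i)) = X + delta alpha - alpha (lift ord0 (ordS (ordS i))).
Proof. vtac R alpha i; by field. Qed.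
Lemma V3c (R : realType) (alpha : 'I_4 -> 'rV[R]_3) (X : 'rV[R]_3) i :
  X + evec alpha i - delta alpha + alpha (lift ord0 (ordS (ordS i))) = X + delta alpha - alpha (lift ord0 (ordS i)).
Proof. vtac R alpha i; by field. Qed.
Lemma V4a (R : realType) (alpha : 'I_4 -> 'rV[R]_3) (X : 'rV[R]_3) i :
  X - evec alpha i - delta alpha + alpha ord0 + alpha (lift ord0 i) = X + delta alpha.
Proof. vtac R alpha i; by field. Qed.
Lemma V4b (R : realType) (alpha : 'I_4 -> 'rV[R]_3) (X : 'rV[R]_3) i :
  X - evec alpha i - delta alpha + alpha ord0 = X + delta alpha - alpha (lift ord0 i).
Proof. vtac R alpha i; by field. Qed.
Lemma V4c (R : realType) (alpha : 'I_4 -> 'rV[R]_3) (X : 'rV[R]_3) i :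
  X - evec alpha i - delta alpha + alpha (lift ord0 i) = X + delta alpha - alpha ord0.
Proof. vtac R alpha i; by field. Qed.



Lemma xvec_p (R : realType) (alpha : 'I_4 -> 'rV[R]_3) n i :
  xvec alpha (shiftp n i) = xvec alpha n + evec alpha i.
Proof.
rewrite /xvec /shiftp.
under eq_bigr => j _ do rewrite intrD scalerDl.
rewrite big_split /=; congr (_ + _).
rewrite (bigD1 i) //= eqxx big1 ?addr0 ?scale1r // => j /negbTE ->.
by rewrite scale0r.
Qed.

Lemma xvec_m (R : realType) (alpha : 'I_4 -> 'rV[R]_3) n i :
  xvec alpha (shiftm n i) = xvec alpha n - evec alpha i.
Proof.
rewrite /xvec /shiftm.
under eq_bigr => j _ do rewrite intrB scalerBl.
rewrite sumrB /=; congr (_ - _).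
rewrite (bigD1 i) //= eqxx big1 ?addr0 ?scale1r // => j /negbTE ->.
by rewrite scale0r.
Qed.

Lemma even_p n i : even_site (shiftp n i) = ~~ even_site n.
Proof.
rewrite /even_site /shiftp big_split /=; set s := (\sum_(j < 3) n j)%R.
rewrite (bigD1 i) //= eqxx big1 ?addr0; last by move=> j /negbTE ->.
apply/idP/idP; lia.
Qed.

Lemma even_m n i : even_site (shiftm n i) = ~~ even_site n.
Proof.
rewrite /even_site /shiftm sumrB /=; set s := (\sum_(j < 3) n j)%R.
rewrite (bigD1 i) //= eqxx big1 ?addr0; last by move=> j /negbTE ->.
apply/idP/idP; lia.
Qed.

Lemma termS (C : fieldType) (t0 tz r s sl tl sm tm al bl ll lm : C) :
  al * bl = ll - lm -> ll - lm != 0 ->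
  al * t0 * s = sl * tm - tl * sm ->
  bl * tl * tm = t0 * tz + r * s ->
  t0 != 0 -> tz != 0 -> 1 + r / t0 * (s / tz) != 0 ->
  s / tz / (1 + r / t0 * (s / tz)) = (sl / tl - sm / tm) / (ll - lm).
Proof.
move=> hab hl hs hb h0 hz h1.
have E1 : 1 + r / t0 * (s / tz) = (t0 * tz + r * s) / (t0 * tz) by field; rewrite h0 hz.
have hP : t0 * tz + r * s != 0.
  by apply: contraNneq h1 => e; rewrite E1 e mul0r.
move: hP; rewrite -hb !mulf_eq0 !negb_or => /andP [/andP [hbl htl] htm].
have hal : al != 0 by apply: contraNneq hl => e; rewrite -hab e mul0r.
rewrite -hab.
have -> : (sl / tl - sm / tm) = (sl * tm - tl * sm) / (tl * tm) by field; rewrite htl htm.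
rewrite -hs E1 -hb.
field.
by rewrite h0 hz hal hbl htl htm.
Qed.

Lemma termR (C : fieldType) (t0 tz r s rl tl rm tm al bl ll lm : C) :
  al * bl = ll - lm -> ll - lm != 0 ->
  al * r * tz = tl * rm - rl * tm ->
  bl * tl * tm = t0 * tz + r * s ->
  t0 != 0 -> tz != 0 -> 1 + s / tz * (r / t0) != 0 ->
  r / t0 / (1 + s / tz * (r / t0)) = (rm / tm - rl / tl) / (ll - lm).
Proof.
move=> hab hl hs hb h0 hz h1.
have E1 : 1 + s / tz * (r / t0) = (t0 * tz + r * s) / (t0 * tz) by field; rewrite h0 hz.
have hP : t0 * tz + r * s != 0.
  by apply: contraNneq h1 => e; rewrite E1 e mul0r.
move: hP; rewrite -hb !mulf_eq0 !negb_or => /andP [/andP [hbl htl] htm].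
have hal : al != 0 by apply: contraNneq hl => e; rewrite -hab e mul0r.
rewrite -hab.
have -> : (rm / tm - rl / tl) = (tl * rm - rl * tm) / (tl * tm) by field; rewrite htl htm.
rewrite -hs E1 -hb.
field.
by rewrite h0 hz hal hbl htl htm.
Qed.

Arguments termS {C t0 tz r s sl tl sm tm al bl ll lm}.
Arguments termR {C t0 tz r s rl tl rm tm al bl ll lm}.

Lemma alg (C : fieldType) (G : 'I_3 -> C) (L S : 'I_4 -> C) :
  \sum_(i < 3) G i = 0 ->
  injective L ->
  \sum_(i < 3) G i * L (lift ord0 i) != 0 ->
  L ord0 = \sum_(i < 3) L (lift ord0 i)
             - (\sum_(i < 3) G i * L (lift ord0 i) ^+ 2)
               / (\sum_(i < 3) G i * L (lift ord0 i)) ->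
  \sum_(i < 3) G i * ((S ord0 - S (lift ord0 i)) / (L ord0 - L (lift ord0 i))
     + (S (lift ord0 (ordS i)) - S (lift ord0 (ordS (ordS i))))
       / (L (lift ord0 (ordS i)) - L (lift ord0 (ordS (ordS i))))) = 0.
Proof.
move=> hG hinj hD hl0.
have d : forall x y : 'I_4, x != y -> L x - L y != 0.
  by move=> x y; rewrite subr_eq0 (inj_eq hinj).
move: hG hD hl0; rewrite !big_ord_recl !big_ord0 !addr0 ?ordS0 ?ordS1 ?ordS2 ?ordS0 ?ordS1 !addrA.
move=> hG hD hl0.
by apply: alg0 => //; apply: d.
Qed.

Theorem proposition3p1 (R : realType)
  (Gamma : 'I_3 -> R[i]) (alpha : 'I_4 -> 'rV[R]_3)
  (lam : 'I_4 -> R[i]) (a b : 'I_4 -> 'I_4 -> R[i])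
  (sigma rho tau : 'rV[R]_3 -> R[i]) :
  \sum_(i < 3) Gamma i = 0 ->
  injective lam ->
  \sum_(i < 3) Gamma i * lam (lift ord0 i) != 0 ->
  lam ord0 = \sum_(i < 3) lam (lift ord0 i)
             - (\sum_(i < 3) Gamma i * lam (lift ord0 i) ^+ 2)
               / (\sum_(i < 3) Gamma i * lam (lift ord0 i)) ->
  (forall l m : 'I_4, l != m -> a m l = - a l m) ->
  (forall l m : 'I_4, l != m -> b m l = b l m) ->
  (forall l m : 'I_4, l != m -> a l m * b l m = lam l - lam m) ->
  (forall (x : 'rV[R]_3) (l m : 'I_4), l != m ->
     a l m * tau x * sigma (x + alpha l + alpha m)
     = sigma (x + alpha l) * tau (x + alpha m) - tau (x + alpha l) * sigma (x + alpha m)) ->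
  (forall (x : 'rV[R]_3) (l m : 'I_4), l != m ->
     a l m * rho x * tau (x + alpha l + alpha m)
     = tau (x + alpha l) * rho (x + alpha m) - rho (x + alpha l) * tau (x + alpha m)) ->
  (forall (x : 'rV[R]_3) (l m : 'I_4), l != m ->
     b l m * tau (x + alpha l) * tau (x + alpha m)
     = tau x * tau (x + alpha l + alpha m) + rho x * sigma (x + alpha l + alpha m)) ->
  forall n : 'I_3 -> int,
    tau (upoint alpha n) != 0 ->
    (forall i : 'I_3, tau (upoint alpha (shiftp n i)) != 0) ->
    (forall i : 'I_3, tau (upoint alpha (shiftm n i)) != 0) ->
    (forall i : 'I_3,
       1 + u alpha sigma rho tau n * u alpha sigma rho tau (shiftp n i) != 0) ->
    (forall i : 'I_3,
       1 + u alpha sigma rho tau n * u alpha sigma rho tau (shiftm n i) != 0) ->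
    \sum_(i < 3) Gamma i *
       (u alpha sigma rho tau (shiftp n i)
          / (1 + u alpha sigma rho tau n * u alpha sigma rho tau (shiftp n i))
        + u alpha sigma rho tau (shiftm n i)
          / (1 + u alpha sigma rho tau n * u alpha sigma rho tau (shiftm n i))) = 0.
Proof.
move=> hG hinj hD hl0 _ _ hab hs hr hb n ht htp htm hup hum.
have nz : forall l m : 'I_4, l != m -> lam l - lam m != 0.
  by move=> l m; rewrite subr_eq0 (inj_eq hinj).
have n0i : forall i : 'I_3, ord0 != lift ord0 i :> 'I_4 by move=> i; exact: neq_lift.
have njk : forall i : 'I_3, lift ord0 (ordS i) != lift ord0 (ordS (ordS i)) :> 'I_4.
  by elim/ord3_cases.
set X := xvec alpha n.
case E: (even_site n).
- set y := X - delta alpha.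
  have U0 : upoint alpha n = y by rewrite /upoint E.
  have Up i : upoint alpha (shiftp n i) = y + alpha ord0 + alpha (lift ord0 i).
    by rewrite /upoint even_p E /= xvec_p V1.
  have Um i : upoint alpha (shiftm n i)
      = y + alpha (lift ord0 (ordS i)) + alpha (lift ord0 (ordS (ordS i))).
    by rewrite /upoint even_m E /= xvec_m V2.
  have uN : u alpha sigma rho tau n = rho y / tau y by rewrite /u E U0.
  have uP i : u alpha sigma rho tau (shiftp n i)
      = sigma (y + alpha ord0 + alpha (lift ord0 i)) / tau (y + alpha ord0 + alpha (lift ord0 i)).
    by rewrite /u even_p E /= Up.
  have uM i : u alpha sigma rho tau (shiftm n i)
      = sigma (y + alpha (lift ord0 (ordS i)) + alpha (lift ord0 (ordS (ordS i))))
        / tau (y + alpha (lift ord0 (ordS i)) + alpha (lift ord0 (ordS (ordS i)))).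
    by rewrite /u even_m E /= Um.
  rewrite -[RHS](alg _ _ _ (fun l => sigma (y + alpha l) / tau (y + alpha l)) hG hinj hD hl0).
  apply: eq_bigr => i _; congr (_ * (_ + _)).
  + rewrite uN uP; apply: termS (hab _ _ (n0i i)) (nz _ _ (n0i i)) (hs _ _ _ (n0i i))
      (hb _ _ _ (n0i i)) _ _ _.
    * by move: ht; rewrite U0.
    * by move: (htp i); rewrite Up.
    * by move: (hup i); rewrite uN uP.
  + rewrite uN uM; apply: termS (hab _ _ (njk i)) (nz _ _ (njk i)) (hs _ _ _ (njk i))
      (hb _ _ _ (njk i)) _ _ _.
    * by move: ht; rewrite U0.
    * by move: (htm i); rewrite Um.
    * by move: (hum i); rewrite uN uM.
- set w := X + delta alpha.
  have U0 : upoint alpha n = w by rewrite /upoint E.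
  have Up i : upoint alpha (shiftp n i) = X + evec alpha i - delta alpha.
    by rewrite /upoint even_p E /= xvec_p.
  have Um i : upoint alpha (shiftm n i) = X - evec alpha i - delta alpha.
    by rewrite /upoint even_m E /= xvec_m.
  have uN : u alpha sigma rho tau n = sigma w / tau w by rewrite /u E U0.
  have uP i : u alpha sigma rho tau (shiftp n i)
      = rho (X + evec alpha i - delta alpha) / tau (X + evec alpha i - delta alpha).
    by rewrite /u even_p E /= Up.
  have uM i : u alpha sigma rho tau (shiftm n i)
      = rho (X - evec alpha i - delta alpha) / tau (X - evec alpha i - delta alpha).
    by rewrite /u even_m E /= Um.
  rewrite -[RHS](alg _ _ _ (fun l => rho (w - alpha l) / tau (w - alpha l)) hG hinj hD hl0).
  apply: eq_bigr => i _; rewrite [X in _ * X]addrC; congr (_ * (_ + _)).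
  + have h1 := hr (X - evec alpha i - delta alpha) _ _ (n0i i).
    have h2 := hb (X - evec alpha i - delta alpha) _ _ (n0i i).
    rewrite V4a V4b V4c in h1 h2.
    rewrite uN uM; apply: termR (hab _ _ (n0i i)) (nz _ _ (n0i i)) h1 h2 _ _ _.
    * by move: (htm i); rewrite Um.
    * by move: ht; rewrite U0.
    * by move: (hum i); rewrite uN uM.
  + have h1 := hr (X + evec alpha i - delta alpha) _ _ (njk i).
    have h2 := hb (X + evec alpha i - delta alpha) _ _ (njk i).
    rewrite V3a V3b V3c in h1 h2.
    rewrite uN uP; apply: termR (hab _ _ (njk i)) (nz _ _ (njk i)) h1 h2 _ _ _.
    * by move: (htp i); rewrite Up.
    * by move: ht; rewrite U0.
    * by move: (hup i); rewrite uN uP.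
Qed.
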